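(* Let $G$ be a finite group. Then the poset $C(G)$ of cyclic subgroups of $G$ possesses a breaking point if and only if $G$ is either a cyclic $p$-group of order at least $p^2$ for some prime $p$, or a generalized quaternion $2$-group $Q_{2^n}$ for some $n\geq 3$.
   Context: For a finite group $G$, $C(G)$ denotes the set of cyclic subgroups of $G$, partially ordered by inclusion. A breaking point of $C(G)$ is a subgroup $H\in C(G)$ with $H\neq 1$ and $H\neq G$ such that for every $X\in C(G)$ we have $X\leq H$ or $H\leq X$. For $n\geq 3$, the generalized quaternion $2$-group is $Q_{2^n}=\langle a,b \mid a^{2^{n-2}}=b^2,\ a^{2^{n-1}}=1,\ b^{-1}ab=a^{-1}\rangle$, of order $2^n$. *)

(* Defs.v *)
From mathcomp Require Import all_boot all_order all_algebra all_fingroup all_solvable.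
From mathcomp Require Import pgroup cyclic extremal.
Set Implicit Arguments. Unset Strict Implicit. Unset Printing Implicit Defensive.

Definition cyclic_subgroup (gT : finGroupType) (G X : {group gT}) : Prop :=
  X \subset G /\ cyclic X.

Definition breaking_point (gT : finGroupType) (G H : {group gT}) : Prop :=
  [/\ cyclic_subgroup G H, H :!=: 1%g, H :!=: G &
      forall X : {group gT}, cyclic_subgroup G X -> X \subset H \/ H \subset X].

(* Main.v *)
Require Import Defs.
From mathcomp Require Import all_boot all_order all_algebra all_fingroup all_solvable.
From mathcomp Require Import pgroup cyclic extremal.
Set Implicit Arguments. Unset Strict Implicit. Unset Printing Implicit Defensive.
Import GroupScope.

Lemma conv_bp (gT : finGroupType) (G : {group gT}) p :
  prime p -> p.-group G -> #|'Ohm_1(G)| = p -> (p ^ 2 <= #|G|)%N ->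
  exists H : {group gT}, breaking_point G H.
Proof.
move=> pr pG oO le; exists ('Ohm_1(G))%G; split.
- by split; [exact: Ohm_sub | apply: prime_cyclic; rewrite oO].
- by rewrite trivg_card1 oO; case: (p) pr => [|[]].
- apply/eqP => E; move: le; rewrite -E /= oO.
  by rewrite -{2}(expn1 p) leq_exp2l // prime_gt1.
move=> X [sXG cX]; have [->|ntX] := eqVneq X 1%G; first by left; exact: sub1G.
right; have pX := pgroupS sXG pG.
have oX := Ohm1_cyclic_pgroup_prime cX pX ntX.
have E : 'Ohm_1(X) = 'Ohm_1(G).
  by apply/eqP; rewrite eqEcard OhmS //= oX oO leqnn.
by rewrite /= -E Ohm_sub.
Qed.

Lemma fwd_bp (gT : finGroupType) (G H : {group gT}) :
  breaking_point G H ->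
  exists p, [/\ prime p, p.-group G, #|'Ohm_1(G)| = p & (p ^ 2 <= #|G|)%N].
Proof.
case=> [[sHG cH] ntH nHG cmp].
have H1 : (1 < #|H|)%N by rewrite cardG_gt1.
set p := pdiv #|H|.
have pr : prime p := pdiv_prime H1.
have pH : p %| #|H| := pdiv_dvd _.
have cc x : x \in G -> <[x]> \subset H \/ H \subset <[x]>.
  move=> Gx; apply: (cmp <[x]>%G); split; [by rewrite cycle_subG | exact: cycle_cyclic].
have constG q g : g \in G -> g.`_q \in G.
  by move=> Gg; apply: (subsetP _ _ (cycle_constt _ g)); rewrite cycle_subG.
have stA g : g \in G -> g.`_p^' \in H.
  move=> Gg; case: (cc _ (constG p^' g Gg)) => [|sH]; first by rewrite cycle_subG.
  have pH' : p^'.-group H := pgroupS sH (p_elt_constt p^' g).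
  by have := pgroupP pH' p pr pH; rewrite !inE eqxx.
have : ~~ (G \subset H) by apply: contra nHG => sGH; rewrite eqEsubset sHG sGH.
case/subsetPn=> g Gg nHg.
have pHg : p.-group H.
  case: (cc _ (constG p g Gg)) => [|sH]; last exact: pgroupS sH (p_elt_constt p g).
  rewrite cycle_subG => Hgp; case/negP: nHg.
  by rewrite -(consttC p g) groupM // stA.
have pG : p.-group G.
  apply/pgroupP => q qpr qG; have [x Gx ox] := Cauchy qpr qG.
  case: (cc _ Gx) => [sxH | sHx].
    by have := mem_p_elt pHg (subsetP sxH _ (cycle_id x)); rewrite /p_elt ox pnatE.
  have : p %| q by rewrite -ox (dvdn_trans pH) // cardSg.
  by rewrite dvdn_prime2 // => /eqP ->; rewrite inE.
have sOH : 'Ohm_1(G) \subset H.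
  rewrite (OhmE 1 pG) gen_subG; apply/subsetP => x; rewrite !inE => /andP[Gx xp].
  case: (cc _ Gx) => [|sHx]; first by rewrite cycle_subG.
  have oxp : (#[x] <= p)%N by rewrite dvdn_leq ?prime_gt0 // order_dvdn.
  have -> : H :=: <[x]>.
    apply/eqP; rewrite eqEcard sHx /= -orderE (leq_trans oxp) //.
    by rewrite dvdn_leq ?cardG_gt0.
  exact: cycle_id.
have oOH : #|'Ohm_1(H)| = p := Ohm1_cyclic_pgroup_prime cH pHg ntH.
exists p; split => //.
  apply/eqP; rewrite eqn_leq -oOH; apply/andP; split; apply: subset_leq_card.
    by rewrite -{1}(Ohm_id 1 G) OhmS.
  exact: OhmS.
have prHG : H \proper G by rewrite properEneq nHG sHG.
have lt := properG_ltn_log pG prHG.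
have [_ _ [m oH]] := pgroup_pdiv pHg ntH.
rewrite oH pfactorK // in lt.
rewrite (card_pgroup pG) leq_exp2l; last exact: prime_gt1.
exact: leq_trans lt.
Qed.

Theorem theorem1p1 (gT : finGroupType) (G : {group gT}) :
  (exists H : {group gT}, breaking_point G H) <->
  ((exists p : nat, [/\ prime p, (p.-group G)%g, cyclic G & p ^ 2 <= #|G|]) \/
   (exists2 n : nat, 3 <= n & G \isog 'Q_(2 ^ n))).
Proof.
split.
  case=> H bp; have [p [pr pG oO le]] := fwd_bp bp.
  have ntG : G :!=: 1.
    rewrite -cardG_gt1; apply: leq_trans le.
    by rewrite (leq_trans (prime_gt1 pr)) // leq_pmulr ?prime_gt0.
  have := introT (prime_Ohm1P pG ntG) oO.
  case/orP=> [cG | /andP[/eqP p2 /eqP/quaternion_classP [n n2 iso]]].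
    by left; exists p.
  by right; exists n.
case=> [[p [pr pG cG le]] | [n n3 iso]].
  have ntG : G :!=: 1.
    rewrite -cardG_gt1; apply: leq_trans le.
    by rewrite (leq_trans (prime_gt1 pr)) // leq_pmulr ?prime_gt0.
  apply: (conv_bp pr pG) => //.
  by apply/(prime_Ohm1P pG ntG); rewrite cG.
have oG : #|G| = (2 ^ n)%N by rewrite (card_isog iso) card_quaternion.
have pG : 2.-group G by rewrite /pgroup oG pnatX pnat_id.
have ntG : G :!=: 1.
  by rewrite -cardG_gt1 oG -[1%N]/(2 ^ 0)%N ltn_exp2l // (leq_trans _ n3).
apply: (conv_bp (p:=2)) => //; last by rewrite oG leq_exp2l // ltnW.
apply/(prime_Ohm1P pG ntG); apply/orP; right; rewrite eqxx /=.
by apply/eqP/quaternion_classP; exists n.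
Qed.
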